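(* Let $K$ be a simplex in a topological vector space $F$ and let $S,T:K\to 2^{K}$ be correspondences such that (i) for each $x\in K$, $\overline{S}(x)\subset T(x)$ and $S(x)\neq\emptyset$; (ii) $S$ has *-weakly convex graph. Then there exists $x^*\in K$ with $x^*\in T(x^* )$.
   Context: A simplex is the convex hull of a finite affinely independent set. For $S:X\to 2^Y$: $\mathrm{Gr}(S)=\{(x,y)\in X\times Y:y\in S(x)\}$; $\overline{S}(x)=\{y\in Y:(x,y)\in\mathrm{cl}_{X\times Y}\mathrm{Gr}(S)\}$; for $V\subset F$, $S_V(x)=(S(x)+V)\cap Y$. Weakly convex graph: $S:X\to 2^Y$ ($X,Y$ nonempty convex) has weakly convex graph if for each finite set $\{x_1,\dots,x_n\}\subset X$ there exist $y_i\in S(x_i)$ such that $\mathrm{co}\{(x_1,y_1),\dots,(x_n,y_n)\}\subset\mathrm{Gr}(S)$, equivalently $\sum_i\lambda_iy_i\in S(\sum_i\lambda_ix_i)$ for all $\lambda_i\ge0$ with $\sum_i\lambda_i=1$. *-weakly convex graph: $S$ has *-weakly convex graph if for each neighborhood $V$ of the origin in $F$ the correspondence $S_V$ has weakly convex graph. *)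

(* Defs.v *)
From Stdlib Require Import Reals List.
Import ListNotations.
Open Scope R_scope.

(* No separation axiom is assumed. *)
Record TVS := mkTVS {
  vT :> Type;
  vzero : vT;
  vadd : vT -> vT -> vT;
  vopp : vT -> vT;
  vscal : R -> vT -> vT;
  vadd_assoc : forall x y z, vadd x (vadd y z) = vadd (vadd x y) z;
  vadd_comm : forall x y, vadd x y = vadd y x;
  vadd_0 : forall x, vadd x vzero = x;
  vadd_opp : forall x, vadd x (vopp x) = vzero;
  vscal_1 : forall x, vscal 1 x = x;
  vscal_assoc : forall a b x, vscal a (vscal b x) = vscal (a * b) x;
  vscal_distr_l : forall a x y, vscal a (vadd x y) = vadd (vscal a x) (vscal a y);
  vscal_distr_r : forall a b x, vscal (a + b) x = vadd (vscal a x) (vscal b x);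
  vopen : (vT -> Prop) -> Prop;
  vopen_full : vopen (fun _ => True);
  vopen_inter : forall U V, vopen U -> vopen V -> vopen (fun x => U x /\ V x);
  vopen_union : forall Fam : (vT -> Prop) -> Prop,
      (forall U, Fam U -> vopen U) -> vopen (fun x => exists U, Fam U /\ U x);
  vadd_cont : forall (U : vT -> Prop) x y, vopen U -> U (vadd x y) ->
      exists V W, vopen V /\ vopen W /\ V x /\ W y /\
        forall x' y', V x' -> W y' -> U (vadd x' y');
  vscal_cont : forall (U : vT -> Prop) t x, vopen U -> U (vscal t x) ->
      exists d W, 0 < d /\ vopen W /\ W x /\
        forall s y, Rabs (s - t) < d -> W y -> U (vscal s y)
}.

Arguments vzero {_}.
Arguments vadd {_}.
Arguments vscal {_}.
Arguments vopen {_}.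

Section Defs.
Variable F : TVS.

Fixpoint sumR (l : list R) : R :=
  match l with [] => 0 | a :: l' => a + sumR l' end.

Fixpoint lincomb (l : list R) (xs : list F) : F :=
  match l, xs with
  | a :: l', x :: xs' => vadd (vscal a x) (lincomb l' xs')
  | _, _ => vzero
  end.

Definition convex_coeffs (lam : list R) (n : nat) : Prop :=
  length lam = n /\ Forall (fun a => 0 <= a) lam /\ sumR lam = 1.

Definition affinely_independent (vs : list F) : Prop :=
  forall lam : list R, length lam = length vs -> sumR lam = 0 ->
    lincomb lam vs = vzero -> Forall (fun a => a = 0) lam.

Definition is_simplex (K : F -> Prop) : Prop :=
  exists vs : list F, vs <> [] /\ affinely_independent vs /\
    forall x, K x <-> exists lam, convex_coeffs lam (length vs) /\ x = lincomb lam vs.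

(* Correspondences X -> 2^Y are represented as S : F -> F -> Prop,
   with S x y meaning y \in S(x). *)

Definition graph (X : F -> Prop) (S : F -> F -> Prop) (x y : F) : Prop :=
  X x /\ S x y.

(* \overline{S}(x) = {y in Y : (x,y) in cl_{X x Y} Gr(S)} *)
Definition closure_corr (X Y : F -> Prop) (S : F -> F -> Prop) (x y : F) : Prop :=
  X x /\ Y y /\
  forall U W : F -> Prop, vopen U -> vopen W -> U x -> W y ->
    exists x' y', graph X S x' y' /\ U x' /\ W y'.

Definition neighborhood_origin (V : F -> Prop) : Prop :=
  exists U, vopen U /\ U vzero /\ forall z, U z -> V z.

Definition corr_V (Y : F -> Prop) (S : F -> F -> Prop) (V : F -> Prop) (x y : F) : Prop :=
  Y y /\ exists s v, S x s /\ V v /\ y = vadd s v.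

Definition weakly_convex_graph (X : F -> Prop) (S : F -> F -> Prop) : Prop :=
  forall xs : list F, NoDup xs -> Forall X xs ->
    exists ys : list F, Forall2 S xs ys /\
      forall lam, convex_coeffs lam (length xs) ->
        graph X S (lincomb lam xs) (lincomb lam ys).

Definition star_weakly_convex_graph (X Y : F -> Prop) (S : F -> F -> Prop) : Prop :=
  forall V, neighborhood_origin V -> weakly_convex_graph X (corr_V Y S V).

End Defs.

(* Main.v *)
Require Import Defs.
From Stdlib Require Import Reals List Lra Lia Classical ClassicalEpsilon.
Import ListNotations.
Open Scope R_scope.

Section V.
Variable F : TVS.

Lemma vadd_0l (x : F) : vadd vzero x = x.
Proof. rewrite vadd_comm; apply vadd_0. Qed.

Lemma vadd_cancel (x y z : F) : vadd x y = vadd x z -> y = z.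
Proof.
  intro H. assert (H2 : vadd (vopp F x) (vadd x y) = vadd (vopp F x) (vadd x z)) by now rewrite H.
  rewrite !vadd_assoc in H2. rewrite (vadd_comm _ (vopp F x) x), vadd_opp, !vadd_0l in H2. exact H2.
Qed.

Lemma vscal_0 (x : F) : vscal 0 x = vzero.
Proof.
  symmetry. apply (vadd_cancel (vscal 0 x)). rewrite vadd_0, <- vscal_distr_r.
  now rewrite Rplus_0_l.
Qed.

Lemma vscal_z (a : R) : vscal a (@vzero F) = vzero.
Proof.
  symmetry. apply (vadd_cancel (vscal a vzero)). rewrite vadd_0, <- vscal_distr_l.
  now rewrite vadd_0.
Qed.

Lemma vneg (x : F) : vadd x (vscal (-1) x) = vzero.
Proof.
  rewrite <- (vscal_1 _ x) at 1. rewrite <- vscal_distr_r.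
  replace (1 + -1) with 0 by ring. apply vscal_0.
Qed.

Lemma vsub_back (s w : F) : vadd (vadd s w) (vscal (-1) w) = s.
Proof. rewrite <- vadd_assoc, vneg, vadd_0. reflexivity. Qed.

Lemma vswap4 (a b c d : F) : vadd (vadd a b) (vadd c d) = vadd (vadd a c) (vadd b d).
Proof.
  rewrite <- !vadd_assoc. f_equal. rewrite !vadd_assoc. f_equal. apply vadd_comm.
Qed.

Fixpoint sumFv (n : nat) (h : nat -> F) : F :=
  match n with O => vzero | S m => vadd (h O) (sumFv m (fun i => h (S i))) end.

Lemma sumFv_ext n : forall h h', (forall i, (i < n)%nat -> h i = h' i) -> sumFv n h = sumFv n h'.
Proof.
  induction n; intros h h' H; simpl; auto.
  rewrite (H 0%nat) by lia. f_equal. apply IHn. intros; apply H; lia.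
Qed.

Lemma sumFv_add n : forall h k, sumFv n (fun i => vadd (h i) (k i)) = vadd (sumFv n h) (sumFv n k).
Proof.
  induction n; intros; simpl. now rewrite vadd_0.
  rewrite IHn. apply vswap4.
Qed.

Lemma sumFv_zero n : sumFv n (fun _ => vzero) = vzero.
Proof. induction n; simpl; auto. rewrite IHn; apply vadd_0. Qed.

Lemma sumFv_scal n : forall a h, sumFv n (fun i => vscal a (h i)) = vscal a (sumFv n h).
Proof.
  induction n; intros; simpl. now rewrite vscal_z.
  rewrite IHn, vscal_distr_l. reflexivity.
Qed.

Lemma sumFv_exch n : forall m (H : nat -> nat -> F),
  sumFv n (fun j => sumFv m (fun i => H j i)) = sumFv m (fun i => sumFv n (fun j => H j i)).
Proof.
  induction n; intros; simpl. now rewrite sumFv_zero.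
  rewrite IHn. rewrite <- sumFv_add. reflexivity.
Qed.

Fixpoint sumRn (n : nat) (r : nat -> R) : R :=
  match n with O => 0 | S m => r O + sumRn m (fun i => r (S i)) end.

Lemma sumFv_rscal n : forall r (v : F), vscal (sumRn n r) v = sumFv n (fun j => vscal (r j) v).
Proof.
  induction n; intros; simpl. apply vscal_0.
  rewrite vscal_distr_r, IHn. reflexivity.
Qed.

End V.

Lemma sumRn_ext n : forall h h', (forall i, (i < n)%nat -> h i = h' i) -> sumRn n h = sumRn n h'.
Proof.
  induction n; intros h h' H; simpl; auto.
  rewrite (H 0%nat) by lia. f_equal. apply IHn. intros; apply H; lia.
Qed.

Lemma sumRn_add n : forall h k, sumRn n (fun i => h i + k i) = sumRn n h + sumRn n k.
Proof. induction n; intros; simpl. ring. rewrite IHn. ring. Qed.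

Lemma sumRn_scal n : forall a h, sumRn n (fun i => a * h i) = a * sumRn n h.
Proof. induction n; intros; simpl. ring. rewrite IHn. ring. Qed.

Lemma sumRn_zero n : sumRn n (fun _ => 0) = 0.
Proof. induction n; simpl; auto. rewrite IHn; ring. Qed.

Lemma sumRn_const1 n : sumRn n (fun _ => 1) = INR n.
Proof. induction n; [reflexivity|]. change (1 + sumRn n (fun _ => 1) = INR (S n)). rewrite IHn, S_INR. ring. Qed.

Lemma sumRn_exch n : forall m (H : nat -> nat -> R),
  sumRn n (fun j => sumRn m (fun i => H j i)) = sumRn m (fun i => sumRn n (fun j => H j i)).
Proof.
  induction n; intros; simpl. now rewrite sumRn_zero.
  rewrite IHn. rewrite <- sumRn_add. reflexivity.
Qed.

Lemma sumRn_tele n : forall a : nat -> R, sumRn n (fun k => a (S k) - a k) = a n - a O.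
Proof.
  induction n; intros; simpl. ring. rewrite (IHn (fun k => a (S k))). ring.
Qed.

Lemma sumRn_nonneg n : forall h, (forall i, (i < n)%nat -> 0 <= h i) -> 0 <= sumRn n h.
Proof.
  induction n; intros h H; simpl. lra.
  assert (0 <= h 0%nat) by (apply H; lia).
  assert (0 <= sumRn n (fun i => h (S i))) by (apply IHn; intros; apply H; lia). lra.
Qed.

Lemma sumRn_le_elem n : forall h j, (forall i, (i < n)%nat -> 0 <= h i) -> (j < n)%nat -> h j <= sumRn n h.
Proof.
  induction n; intros h j H Hj; simpl. lia.
  destruct j.
  - assert (0 <= sumRn n (fun i => h (S i))) by (apply sumRn_nonneg; intros; apply H; lia). lra.
  - assert (0 <= h 0%nat) by (apply H; lia).
    assert (h (S j) <= sumRn n (fun i => h (S i))) by (apply (IHn (fun i => h (S i))); [intros; apply H; lia | lia]). lra.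
Qed.

Lemma sumRn_abs n : forall h, Rabs (sumRn n h) <= sumRn n (fun i => Rabs (h i)).
Proof.
  induction n; intros; simpl. rewrite Rabs_R0; lra.
  eapply Rle_trans. apply Rabs_triang. specialize (IHn (fun i => h (S i))). lra.
Qed.

Lemma sumRn_bound n : forall h c, (forall i, (i < n)%nat -> h i <= c) -> sumRn n h <= INR n * c.
Proof.
  induction n; intros h c H. simpl; lra.
  change (h 0%nat + sumRn n (fun i => h (S i)) <= INR (S n) * c).
  assert (h 0%nat <= c) by (apply H; lia).
  assert (sumRn n (fun i => h (S i)) <= INR n * c) by (apply IHn; intros; apply H; lia).
  rewrite S_INR. lra.
Qed.

Lemma sumRn_delta n : forall i a, (i < n)%nat -> sumRn n (fun k => if Nat.eqb k i then a else 0) = a.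
Proof.
  induction n; intros i a H; simpl. lia.
  destruct i.
  - simpl. rewrite sumRn_zero. ring.
  - simpl. rewrite (IHn i a) by lia. ring.
Qed.

Section V2.
Variable F : TVS.

Definition lcF (f : nat -> R) (vs : list F) : F :=
  sumFv F (length vs) (fun j => vscal (f j) (nth j vs vzero)).

Lemma lincomb_eq (xs : list F) : forall lam, length lam = length xs ->
  lincomb F lam xs = sumFv F (length xs) (fun j => vscal (nth j lam 0) (nth j xs vzero)).
Proof.
  induction xs as [|x xs IH]; intros [|a lam] H; simpl in *; try lia; auto.
  rewrite IH by lia. reflexivity.
Qed.

Lemma lincomb_lcF (xs : list F) lam : length lam = length xs ->
  lincomb F lam xs = lcF (fun i => nth i lam 0) xs.
Proof. intro; now apply lincomb_eq. Qed.

Lemma lcF_ext f g vs : (forall i, (i < length vs)%nat -> f i = g i) -> lcF f vs = lcF g vs.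
Proof. intro H. unfold lcF. apply sumFv_ext. intros. now rewrite H. Qed.

Lemma lcF_add f g vs : lcF (fun i => f i + g i) vs = vadd (lcF f vs) (lcF g vs).
Proof. unfold lcF. rewrite <- sumFv_add. apply sumFv_ext. intros. apply vscal_distr_r. Qed.

Lemma lcF_scal a f vs : lcF (fun i => a * f i) vs = vscal a (lcF f vs).
Proof. unfold lcF. rewrite <- sumFv_scal. apply sumFv_ext. intros. now rewrite vscal_assoc. Qed.

Lemma lcF_zero vs : lcF (fun _ => 0) vs = vzero.
Proof. unfold lcF. rewrite (sumFv_ext _ _ _ (fun _ => vzero)). apply sumFv_zero. intros; apply vscal_0. Qed.

Lemma lcF_sum m (H : nat -> nat -> R) vs :
  lcF (fun i => sumRn m (fun j => H j i)) vs = sumFv F m (fun j => lcF (H j) vs).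
Proof.
  unfold lcF. rewrite sumFv_exch. apply sumFv_ext. intros. apply sumFv_rscal.
Qed.

Lemma sumFv_delta n : forall i (x : F), (i < n)%nat -> sumFv F n (fun k => if Nat.eqb k i then x else vzero) = x.
Proof.
  induction n; intros i x H; simpl. lia.
  destruct i.
  - simpl. rewrite sumFv_zero. apply vadd_0.
  - simpl. rewrite (IHn i x) by lia. apply vadd_0l.
Qed.

Lemma cont_sum n : forall (u : nat -> F) f O, vopen O -> O (sumFv F n (fun j => vscal (f j) (u j))) ->
  exists d, 0 < d /\ forall f', (forall i, (i < n)%nat -> Rabs (f' i - f i) < d) ->
    O (sumFv F n (fun j => vscal (f' j) (u j))).
Proof.
  induction n; intros u f O HO HOx.
  - exists 1. split. lra. intros. exact HOx.
  - simpl in HOx. destruct (vadd_cont F O _ _ HO HOx) as (V & W & HV & HW & HVx & HWy & Hsum).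
    destruct (vscal_cont F V (f 0%nat) (u 0%nat) HV HVx) as (d0 & W0 & Hd0 & HW0 & HW0u & Hsc).
    destruct (IHn (fun i => u (S i)) (fun i => f (S i)) W HW HWy) as (d1 & Hd1 & H1).
    exists (Rmin d0 d1). split. now apply Rmin_pos.
    intros f' Hf'. simpl. apply Hsum.
    + apply Hsc; auto. assert (Rabs (f' 0%nat - f 0%nat) < Rmin d0 d1) by (apply Hf'; lia).
      pose proof (Rmin_l d0 d1). lra.
    + apply (H1 (fun i => f' (S i))). intros i Hi.
      assert (Rabs (f' (S i) - f (S i)) < Rmin d0 d1) by (apply Hf'; lia).
      pose proof (Rmin_r d0 d1). lra.
Qed.

Lemma cont_lcF vs f O : vopen O -> O (lcF f vs) ->
  exists d, 0 < d /\ forall f', (forall i, (i < length vs)%nat -> Rabs (f' i - f i) < d) -> O (lcF f' vs).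
Proof. intros. unfold lcF in *. now apply (cont_sum (length vs) (fun j => nth j vs vzero)). Qed.

End V2.

Lemma sumR_eq lam : sumR lam = sumRn (length lam) (fun i => nth i lam 0).
Proof. induction lam; simpl; auto. now rewrite IHlam. Qed.

Lemma cover1 (rho : R -> R) : (forall a, 0 <= a <= 1 -> 0 < rho a) ->
  exists A, (forall a, In a A -> 0 <= a <= 1) /\
    forall x, 0 <= x <= 1 -> exists a, In a A /\ Rabs (x - a) < rho a.
Proof.
  intro Hr.
  set (fam := mkfamily (fun a => 0 <= a <= 1) (fun a x => (0 <= a <= 1) /\ Rabs (x - a) < rho a)
     (fun a (H : exists y, (0 <= a <= 1) /\ Rabs (y - a) < rho a) => match H with ex_intro _ _ h => proj1 h end)).
  assert (Hc : covering_open_set (fun c => 0 <= c <= 1) fam).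
  { split.
    - intros x Hx. exists x. simpl. split; auto. rewrite Rminus_diag, Rabs_R0. auto.
    - intros a y [Ha Hy]. simpl in *.
      assert (Hp : 0 < rho a - Rabs (y - a)) by lra.
      exists (mkposreal _ Hp). intros z Hz. unfold disc in Hz; simpl in Hz. split; auto.
      replace (z - a) with ((z - y) + (y - a)) by ring.
      pose proof (Rabs_triang (z - y) (y - a)). lra. }
  destruct (compact_P3 0 1 fam Hc) as [D [Hcov [l Hl]]].
  exists l. split.
  - intros a Ha. apply Hl in Ha. destruct Ha as [Ha _]. exact Ha.
  - intros x Hx. destruct (Hcov x Hx) as [a [[Ha Hxa] HD]].
    exists a. split; auto. apply Hl. split; auto.
Qed.

Definition box (n : nat) (x : nat -> R) := forall i, (i < n)%nat -> 0 <= x i <= 1.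
Definition closeF (n : nat) (d : R) (x t : nat -> R) := forall i, (i < n)%nat -> Rabs (x i - t i) < d.
Definition consF (a : R) (y : nat -> R) : nat -> R := fun i => match i with O => a | S k => y k end.

Lemma minl_pos l : (forall x, In x l -> 0 < x) -> 0 < fold_right Rmin 1 l.
Proof.
  induction l; simpl; intros H. lra. apply Rmin_pos; auto.
Qed.

Lemma minl_le l x : In x l -> fold_right Rmin 1 l <= x.
Proof.
  induction l; simpl; intros H. contradiction.
  destruct H as [<-|H]. apply Rmin_l. eapply Rle_trans. apply Rmin_r. auto.
Qed.

Lemma coverN n : forall (dl : (nat -> R) -> R), (forall t, box n t -> 0 < dl t) ->
  exists L, (forall t, In t L -> box n t) /\ forall x, box n x -> exists t, In t L /\ closeF n (dl t) x t.
Proof.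
  induction n; intros dl Hd.
  - exists [fun _ => 0]. split.
    + intros t _ i Hi. lia.
    + intros x _. exists (fun _ => 0). split. now left. intros i Hi; lia.
  - set (P := fun a L => (forall t, In t L -> box n t) /\
        forall x, box n x -> exists t, In t L /\ closeF n (dl (consF a t) / 2) x t).
    set (Lf := fun a => epsilon (inhabits (@nil (nat -> R))) (P a)).
    assert (HLf : forall a, 0 <= a <= 1 -> P a (Lf a)).
    { intros a Ha. apply epsilon_spec. apply IHn. intros t Ht.
      assert (0 < dl (consF a t)). apply Hd. intros [|i] Hi; simpl; auto. apply Ht; lia. lra. }
    set (rho := fun a => fold_right Rmin 1 (map (fun t => dl (consF a t) / 2) (Lf a))).
    assert (Hrho : forall a, 0 <= a <= 1 -> 0 < rho a).
    { intros a Ha. apply minl_pos. intros x Hx. apply in_map_iff in Hx. destruct Hx as [t [<- Ht]].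
      destruct (HLf a Ha) as [Hb _]. assert (0 < dl (consF a t)).
      apply Hd. intros [|i] Hi; simpl; auto. apply (Hb t Ht); lia. lra. }
    destruct (cover1 rho Hrho) as [A [HA HAc]].
    exists (flat_map (fun a => map (consF a) (Lf a)) A). split.
    + intros t Ht. apply in_flat_map in Ht. destruct Ht as [a [Ha Ht]].
      apply in_map_iff in Ht. destruct Ht as [y [<- Hy]].
      destruct (HLf a (HA a Ha)) as [Hb _].
      intros [|i] Hi; simpl. auto. apply (Hb y Hy); lia.
    + intros x Hx. assert (Hx0 : 0 <= x 0%nat <= 1) by (apply Hx; lia).
      destruct (HAc _ Hx0) as [a [Ha Hxa]].
      destruct (HLf a (HA a Ha)) as [Hb Hc].
      destruct (Hc (fun i => x (S i))) as [t [Ht Hxt]]. { intros i Hi; apply Hx; lia. }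
      exists (consF a t). split.
      * apply in_flat_map. exists a. split; auto. apply in_map. auto.
      * assert (Hr : rho a <= dl (consF a t) / 2).
        { apply minl_le. apply in_map_iff. exists t; auto. }
        assert (0 < dl (consF a t)). { apply Hd. intros [|i] Hi; simpl; auto. apply (Hb t Ht); lia. }
        intros [|i] Hi; simpl. lra. specialize (Hxt i ltac:(lia)). simpl in Hxt. lra.
Qed.

Definition inD (n : nat) (f : nat -> R) := (forall i, (i < n)%nat -> 0 <= f i) /\ sumRn n f = 1.

Lemma nth_map_seq (f : nat -> R) n i : (i < n)%nat -> nth i (map f (seq 0 n)) 0 = f i.
Proof.
  intro H. rewrite (nth_indep _ _ (f 0%nat)) by (rewrite length_map, length_seq; auto).
  rewrite map_nth, seq_nth by auto. reflexivity.
Qed.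

Lemma D_conv n f : inD n f -> convex_coeffs (map f (seq 0 n)) n.
Proof.
  intros [H1 H2]. split; [|split].
  - now rewrite length_map, length_seq.
  - apply Forall_forall. intros x Hx. apply in_map_iff in Hx. destruct Hx as [i [<- Hi]].
    apply in_seq in Hi. apply H1. lia.
  - rewrite sumR_eq, length_map, length_seq. rewrite <- H2. apply sumRn_ext. intros; apply nth_map_seq; auto.
Qed.

Lemma conv_D lam n : convex_coeffs lam n -> inD n (fun i => nth i lam 0).
Proof.
  intros [H1 [H2 H3]]. split.
  - intros i Hi. rewrite Forall_nth in H2. apply H2. lia.
  - rewrite sumR_eq in H3. now rewrite <- H1.
Qed.

Lemma inD_box n f : inD n f -> box n f.
Proof.
  intros [H1 H2] i Hi. split. auto. rewrite <- H2. apply sumRn_le_elem; auto.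
Qed.

Lemma sumRn_minus n : forall h k, sumRn n (fun i => h i - k i) = sumRn n h - sumRn n k.
Proof. induction n; intros; simpl. ring. rewrite IHn. ring. Qed.

Lemma Forall2_nth' {A B} (P : A -> B -> Prop) l1 l2 d1 d2 : Forall2 P l1 l2 ->
  length l1 = length l2 /\ forall i, (i < length l1)%nat -> P (nth i l1 d1) (nth i l2 d2).
Proof.
  induction 1. simpl; split; auto; intros; lia.
  destruct IHForall2 as [IH1 IH2]. simpl. split. lia.
  intros [|i] Hi; simpl; auto. apply IH2; lia.
Qed.

Section V4.
Variable F : TVS.

Lemma lcF_delta (vs : list F) i a : (i < length vs)%nat ->
  lcF F (fun k => if Nat.eqb k i then a else 0) vs = vscal a (nth i vs vzero).
Proof.
  intro H. unfold lcF.
  rewrite (sumFv_ext _ _ _ (fun k => if Nat.eqb k i then vscal a (nth i vs vzero) else vzero)).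
  - now apply sumFv_delta.
  - intros k Hk. destruct (Nat.eqb_spec k i). subst; auto. apply vscal_0.
Qed.

Lemma lincomb_map (vs : list F) f : lincomb F (map f (seq 0 (length vs))) vs = lcF F f vs.
Proof.
  rewrite lincomb_lcF by (now rewrite length_map, length_seq).
  apply lcF_ext. intros; apply nth_map_seq; auto.
Qed.

Lemma AI_NoDup (vs : list F) : affinely_independent F vs -> NoDup vs.
Proof.
  intro HAI. apply (NoDup_nth vs vzero). intros i j Hi Hj Heq.
  destruct (Nat.eq_dec i j); auto. exfalso.
  set (f := fun k => (if Nat.eqb k i then 1 else 0) + (if Nat.eqb k j then -1 else 0)).
  assert (Hl : length (map f (seq 0 (length vs))) = length vs) by now rewrite length_map, length_seq.
  specialize (HAI _ Hl).
  assert (Hs : sumR (map f (seq 0 (length vs))) = 0).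
  { rewrite sumR_eq, Hl. rewrite (sumRn_ext _ _ f) by (intros; apply nth_map_seq; auto).
    unfold f. rewrite sumRn_add, !sumRn_delta by auto. ring. }
  specialize (HAI Hs). rewrite lincomb_map in HAI. unfold f in HAI.
  rewrite lcF_add, !lcF_delta, vscal_1, Heq, vneg in HAI by auto.
  specialize (HAI eq_refl). rewrite Forall_nth in HAI. specialize (HAI i 0 ltac:(rewrite length_map, length_seq; lia)).
  rewrite nth_map_seq in HAI by auto. unfold f in HAI.
  rewrite Nat.eqb_refl in HAI. destruct (Nat.eqb_spec i j). contradiction. lra.
Qed.

Lemma Wstar_props (G : (nat -> R) -> (F -> Prop)) L : (forall t, In t L -> vopen (G t) /\ G t vzero) ->
  vopen (fold_right (fun t P => fun z => G t z /\ P z) (fun _ => True) L) /\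
  fold_right (fun t P => fun z => G t z /\ P z) (fun _ => True) L vzero.
Proof.
  induction L; intros H; simpl.
  - split; auto. apply vopen_full.
  - destruct (H a (or_introl eq_refl)). destruct IHL as [H3 H4]. intros; apply H; simpl; auto.
    split. apply vopen_inter; auto. split; auto.
Qed.

Lemma Wstar_in (G : (nat -> R) -> (F -> Prop)) L z t :
  fold_right (fun t P => fun z => G t z /\ P z) (fun _ => True) L z -> In t L -> G t z.
Proof.
  induction L; simpl; intros H Ht. contradiction. destruct H. destruct Ht as [<-|Ht]; auto.
Qed.

End V4.

Theorem corollary1 (F : TVS) (K : F -> Prop) (S T : F -> F -> Prop)
  (hK : is_simplex F K)
  (hS : forall x y, K x -> S x y -> K y)
  (hT : forall x y, K x -> T x y -> K y)
  (h1 : forall x, K x -> (forall y, closure_corr F K K S x y -> T x y) /\ exists y, S x y)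
  (h2 : star_weakly_convex_graph F K K S) :
  exists xs, K xs /\ T xs xs.
Proof.
  apply NNPP; intro Hno.
  destruct hK as [vs [Hne [HAI HK]]].
  set (n := length vs).
  assert (HKD : forall f, inD n f -> K (lcF F f vs)).
  { intros f Hf. apply HK. exists (map f (seq 0 n)). split. now apply D_conv.
    unfold n. now rewrite lincomb_map. }
  assert (HKD' : forall x, K x -> exists f, inD n f /\ x = lcF F f vs).
  { intros x Hx. apply HK in Hx. destruct Hx as [lam [Hc ->]]. exists (fun i => nth i lam 0).
    split. now apply conv_D. apply lincomb_lcF. destruct Hc; auto. }
  set (KeyP := fun t (p : R * (F -> Prop)) => box n t -> 0 < fst p /\ vopen (snd p) /\ snd p vzero /\
      forall l c s w, inD n l -> closeF n (fst p) l t -> (forall i, (i < n)%nat -> Rabs (c i) < fst p) ->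
        S (lcF F l vs) s -> snd p w -> vadd s w = vadd (lcF F l vs) (lcF F c vs) -> False).
  assert (Hkey : forall t, exists p, KeyP t p).
  { intro t. destruct (classic (inD n t)) as [Ht|Ht].
    - set (x := lcF F t vs). assert (Kx : K x) by now apply HKD.
      assert (Hncl : ~ closure_corr F K K S x x).
      { intro Hc. apply Hno. exists x. split; auto. apply (h1 x Kx). auto. }
      assert (HUW : exists U W, vopen U /\ vopen W /\ U x /\ W x /\
                 ~ exists x' y', graph F K S x' y' /\ U x' /\ W y').
      { apply NNPP; intro H. apply Hncl. split; [|split]; auto.
        intros U W HU HW HUx HWx. apply NNPP; intro H'. apply H. exists U, W; auto. }
      destruct HUW as (U & W & HU & HW & HUx & HWx & Hnot).
      set (O := fun z => U z /\ W z).
      assert (HO : vopen O) by now apply vopen_inter.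
      assert (HOx : O (vadd x vzero)) by (rewrite vadd_0; split; auto).
      destruct (vadd_cont F O _ _ HO HOx) as (A & B & HA & HB & HAx & HB0 & HAB).
      assert (HB00 : B (vadd vzero vzero)) by now rewrite vadd_0.
      destruct (vadd_cont F B _ _ HB HB00) as (B1 & B2 & HB1 & HB2 & HB10 & HB20 & HB12).
      assert (HB2' : B2 (vscal (-1) vzero)) by now rewrite vscal_z.
      destruct (vscal_cont F B2 (-1) vzero HB2 HB2') as (d0 & W2 & Hd0 & HW2 & HW20 & Hsc).
      assert (HAO : vopen (fun z => A z /\ O z)) by now apply vopen_inter.
      destruct (cont_lcF F vs t (fun z => A z /\ O z) HAO) as (d1 & Hd1 & Hc1).
      { split; auto. split; auto. }
      assert (HB1z : B1 (lcF F (fun _ => 0) vs)) by now rewrite lcF_zero.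
      destruct (cont_lcF F vs (fun _ => 0) B1 HB1 HB1z) as (d2 & Hd2 & Hc2).
      exists (Rmin d1 d2, W2). intros _. simpl. split. now apply Rmin_pos.
      split; auto. split; auto.
      intros l c s w Hl Hlt Hc Hs Hw Heq.
      assert (Hx' : A (lcF F l vs) /\ O (lcF F l vs)).
      { apply Hc1. intros i Hi. specialize (Hlt i Hi). pose proof (Rmin_l d1 d2). lra. }
      assert (Hd : B1 (lcF F c vs)).
      { apply Hc2. intros i Hi. specialize (Hc i Hi). pose proof (Rmin_r d1 d2).
        rewrite Rminus_0_r. lra. }
      assert (Hw' : B2 (vscal (-1) w)).
      { apply Hsc; auto. rewrite Rminus_diag, Rabs_R0. auto. }
      assert (Hs' : O s).
      { rewrite <- (vsub_back F s w), Heq, <- vadd_assoc. apply HAB. tauto. apply HB12; auto. }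
      apply Hnot. exists (lcF F l vs), s. split. split; auto. split; [apply Hx'|apply Hs'].
    - assert (Hsum : box n t -> sumRn n t <> 1).
      { intros Hb Hs. apply Ht. split; auto. intros i Hi. apply Hb; auto. }
      exists (Rabs (sumRn n t - 1) / (INR n + 1), fun _ => True). intros Hb. simpl.
      specialize (Hsum Hb).
      assert (He : 0 < Rabs (sumRn n t - 1)) by (apply Rabs_pos_lt; lra).
      assert (Hn : 0 <= INR n) by apply pos_INR.
      split. apply Rdiv_lt_0_compat; lra. split. apply vopen_full. split; auto.
      intros l c s w Hl Hlt _ _ _ _.
      set (q := Rabs (sumRn n t - 1) / (INR n + 1)) in *.
      assert (Hq : Rabs (sumRn n t - 1) = q * (INR n + 1)) by (unfold q; field; lra).
      assert (H1' : Rabs (sumRn n (fun i => l i - t i)) <= INR n * q).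
      { eapply Rle_trans. apply sumRn_abs. apply sumRn_bound. intros i Hi. left. apply Hlt; auto. }
      rewrite sumRn_minus, (proj2 Hl) in H1'.
      rewrite Rabs_minus_sym in H1'. assert (0 < q) by (unfold q; apply Rdiv_lt_0_compat; lra).
      nra. }
  set (pp := fun t => epsilon (inhabits (1, fun _ : F => True)) (KeyP t)).
  assert (Hpp : forall t, KeyP t (pp t)) by (intro t; apply epsilon_spec, Hkey).
  destruct (coverN n (fun t => fst (pp t))) as [L [HL HLc]].
  { intros t Ht. apply (Hpp t Ht). }
  set (dstar := fold_right Rmin 1 (map (fun t => fst (pp t)) L)).
  assert (Hdstar : 0 < dstar).
  { apply minl_pos. intros x Hx. apply in_map_iff in Hx. destruct Hx as [t [<- Ht]]. apply (Hpp t (HL t Ht)). }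
  set (Wstar := fold_right (fun t P => fun z => snd (pp t) z /\ P z) (fun _ => True) L).
  destruct (Wstar_props F (fun t => snd (pp t)) L) as [HWo HW0].
  { intros t Ht. destruct (Hpp t (HL t Ht)) as (_ & ? & ? & _). auto. }
  assert (Hnb : neighborhood_origin F Wstar) by (exists Wstar; auto).
  destruct (h2 Wstar Hnb vs) as [ys [HF2 Hconv]].
  { now apply AI_NoDup. }
  { apply Forall_nth. intros i d Hi. rewrite (nth_indep _ _ vzero) by auto.
    rewrite <- (vscal_1 F (nth i vs vzero)), <- lcF_delta by auto. apply HKD.
    split. intros k _; destruct (Nat.eqb k i); lra. apply sumRn_delta; auto. }
  destruct (Forall2_nth' _ _ _ vzero vzero HF2) as [Hlys Hys].
  set (mu := fun j => epsilon (inhabits (fun _ : nat => 0)) (fun f => inD n f /\ nth j ys vzero = lcF F f vs)).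
  assert (Hmu : forall j, (j < n)%nat -> inD n (mu j) /\ nth j ys vzero = lcF F (mu j) vs).
  { intros j Hj. apply epsilon_spec. apply HKD'. apply (Hys j Hj). }
  set (g := fun (l : nat -> R) => fun i => sumRn n (fun j => l j * mu j i)).
  assert (Hg : forall l, inD n l -> inD n (g l)).
  { intros l [Hl1 Hl2]. split.
    - intros i Hi. apply sumRn_nonneg. intros j Hj. apply Rmult_le_pos; auto. apply (proj1 (Hmu j Hj)); auto.
    - unfold g. rewrite <- sumRn_exch. rewrite <- Hl2. apply sumRn_ext. intros j Hj.
      rewrite sumRn_scal, (proj2 (proj1 (Hmu j Hj))). ring. }
  assert (Hn0 : (0 < n)%nat) by (unfold n; destruct vs; simpl; [congruence|lia]).
  set (e0 := fun k => if Nat.eqb k 0 then 1 else 0).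
  assert (He0 : inD n e0).
  { split. intros; unfold e0; destruct (Nat.eqb i 0); lra. apply sumRn_delta; auto. }
  set (lamk := fun k => Nat.iter k g e0).
  assert (Hlamk : forall k, inD n (lamk k)).
  { induction k. exact He0. apply Hg. exact IHk. }
  destruct (archimed_cor1 dstar Hdstar) as [N [HN HN0]].
  assert (HNp : 0 < INR N) by (apply lt_0_INR; auto).
  set (sig := fun i => / INR N * sumRn N (fun k => lamk k i)).
  assert (Hsig : inD n sig).
  { split.
    - intros i Hi. unfold sig. apply Rmult_le_pos. left; apply Rinv_0_lt_compat; auto.
      apply sumRn_nonneg. intros k _. apply (proj1 (Hlamk k)); auto.
    - unfold sig. rewrite sumRn_scal, sumRn_exch.
      rewrite (sumRn_ext _ _ (fun _ => 1)) by (intros k _; apply (proj2 (Hlamk k))).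
      rewrite sumRn_const1. field. lra. }
  set (c := fun i => g sig i - sig i).
  assert (Hcval : forall i, c i = / INR N * (lamk N i - lamk 0%nat i)).
  { intro i. unfold c, g, sig.
    rewrite (sumRn_ext _ _ (fun j => / INR N * sumRn N (fun k => mu j i * lamk k j))).
    2:{ intros j Hj. rewrite sumRn_scal. ring. }
    rewrite sumRn_scal, sumRn_exch.
    rewrite (sumRn_ext _ (fun k => sumRn n (fun j => mu j i * lamk k j)) (fun k => lamk (Datatypes.S k) i)).
    2:{ intros k _. simpl. unfold g. apply sumRn_ext. intros; ring. }
    rewrite <- (sumRn_tele N (fun k => lamk k i)), sumRn_minus. ring. }
  assert (Hc : forall i, (i < n)%nat -> Rabs (c i) < dstar).
  { intros i Hi. rewrite Hcval. rewrite Rabs_mult, Rabs_inv, (Rabs_right (INR N)) by lra.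
    pose proof (inD_box _ _ (Hlamk N) i Hi). pose proof (inD_box _ _ (Hlamk 0%nat) i Hi).
    assert (Rabs (lamk N i - lamk 0%nat i) <= 1) by (apply Rabs_le; lra).
    assert (0 < / INR N) by (apply Rinv_0_lt_compat; auto).
    nra. }
  assert (HGr := Hconv (map sig (seq 0 n)) (D_conv _ _ Hsig)).
  destruct HGr as [_ [_ [s [v [Hs [Hv Hy]]]]]].
  unfold n in Hy, Hs. rewrite lincomb_map in Hs.
  rewrite lincomb_lcF in Hy by (rewrite length_map, length_seq; auto).
  assert (Hy2 : lcF F (fun i => nth i (map sig (seq 0 (length vs))) 0) ys = lcF F (g sig) vs).
  { unfold lcF at 1. rewrite <- Hlys. unfold g. rewrite lcF_sum. apply sumFv_ext. intros j Hj.
    rewrite nth_map_seq by auto. rewrite lcF_scal. f_equal. apply (Hmu j Hj). }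
  rewrite Hy2 in Hy.
  assert (Hy3 : lcF F (g sig) vs = vadd (lcF F sig vs) (lcF F c vs)).
  { rewrite <- lcF_add. apply lcF_ext. intros; unfold c; ring. }
  destruct (HLc sig (inD_box _ _ Hsig)) as [t [Ht Hclose]].
  destruct (Hpp t (HL t Ht)) as (_ & _ & _ & Hfin).
  apply (Hfin sig c s v Hsig Hclose).
  - intros i Hi. eapply Rlt_le_trans. apply Hc; auto. apply minl_le. apply in_map_iff. exists t; auto.
  - exact Hs.
  - exact (Wstar_in F (fun t => snd (pp t)) L v t Hv Ht).
  - rewrite <- Hy, Hy3. reflexivity.
Qed.
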